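(* Assume $N\ge2$, $\mathcal{G}_u$ connected and Assumption 1. Let $A=[A_1;A_2]\in\mathbb{R}^{4EM\times NM}$ and $B=[-I_{2EM};-I_{2EM}]$, $f(x)=\sum_i f_i(x_i)$. Consider the iteration: given $x^0\in\mathbb{R}^{NM}$, set $x^0_{[Q]}=Q(x^0)$, $z_Q^0=\tfrac12M_+^Tx^0_{[Q]}$, and $\lambda_Q^0=[\beta_Q^0;\gamma_Q^0]$ with $\gamma_Q^0=-\beta_Q^0$; for $k\ge0$ let $x^{k+1}$ be the minimizer of $f(x)+(\lambda_Q^k)^T(Ax+Bz_Q^k)+\tfrac{\rho}{2}\|Ax+Bz_Q^k\|_2^2$, $x^{k+1}_{[Q]}=Q(x^{k+1})$, $z_Q^{k+1}$ the solution of $B^T\lambda_Q^k+\rho B^T(Ax^{k+1}_{[Q]}+Bz_Q^{k+1})=0$, and $\lambda_Q^{k+1}=\lambda_Q^k+\rho(Ax^{k+1}_{[Q]}+Bz_Q^{k+1})$, where $\lambda_Q^k=[\beta_Q^k;\gamma_Q^k]$ with $\beta_Q^k,\gamma_Q^k\in\mathbb{R}^{2EM}$. Then for all $k\ge0$: $\gamma_Q^k=-\beta_Q^k$, $z_Q^k=\tfrac12M_+^Tx^k_{[Q]}$, and, with $\alpha_Q^k:=M_-\beta_Q^k$, the pair $(x^k,\alpha_Q^k)$ satisfies $0\in\partial f(x^{k+1})+2\rho Wx^{k+1}+\alpha_Q^k-\rho L_+x^k_{[Q]}$ and $\alpha_Q^{k+1}=\alpha_Q^k+\rho L_-x^{k+1}_{[Q]}$;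 that is, it coincides with the QC-ADMM iteration started from $x^0$ and $\alpha_Q^0=M_-\beta_Q^0$.
   Context: Network and matrices: $\mathcal{G}_u$ is an undirected graph with vertices $\{1,\dots,N\}$ and $E$ edges; $\mathcal{N}_i$ is the neighbor set of $i$. Each edge $\{i,j\}$ gives arcs $(i,j),(j,i)$, enumerated $q=1,\dots,2E$. Fix $M\ge1$. $A_1,A_2\in\mathbb{R}^{2EM\times NM}$ consist of $2E\times N$ blocks of size $M\times M$: if arc $q$ is $(i,j)$, the $(q,i)$ block of $A_1$ and the $(q,j)$ block of $A_2$ are $I_M$, other blocks zero. $M_+=A_1^T+A_2^T$, $M_-=A_1^T-A_2^T$, $L_+=\tfrac12M_+M_+^T$, $L_-=\tfrac12M_-M_-^T$, and $W$ is block diagonal with $i$th diagonal block $|\mathcal{N}_i|I_M$. Vectors in $\mathbb{R}^{NM}$ are $x=[x_1;\dots;x_N]$, $x_i\in\mathbb{R}^M$. Assumption 1: each $f_i:\mathbb{R}^M\to\mathbb{R}\cup\{\infty\}$ is proper, closed and convex, has a subgradient wherever finite, and $\min\sum_if_i$ is attained. Quantizer: $\Delta>0$; the scalar rounding quantizer is $Q(y)=t\Delta$ if $(t-\tfrac12)\Delta\le y<(t+\tfrac12)\Delta$, $t\in\mathbb{Z}$; for vectors it acts entrywise, and $w_{[Q]}=Q(w)$. $\rho>0$ is fixed. *)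

(* Defs.v *)
From HB Require Import structures.
From mathcomp Require Import all_boot all_order all_algebra.
Set Implicit Arguments. Unset Strict Implicit. Unset Printing Implicit Defensive.
Import Order.TTheory GRing.Theory Num.Theory.
Local Open Scope ring_scope.

Inductive ext (R : Type) := Fin of R | PInf.
Arguments PInf {R}.

Definition ele (R : numDomainType) (a b : ext R) : Prop :=
  match a, b with
  | Fin x, Fin y => x <= y
  | _, PInf => True
  | PInf, Fin _ => False
  end.

Definition eadd (R : numDomainType) (a b : ext R) : ext R :=
  match a, b with
  | Fin x, Fin y => Fin (x + y)
  | _, _ => PInf
  end.

Section Defs.
Variable R : archiRealFieldType.

Definition dotv (n : nat) (u v : 'cV[R]_n) : R := (u^T *m v) 0 0.
Definition sqnorm (n : nat) (v : 'cV[R]_n) : R := dotv v v.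

(* proper (never -oo by construction, finite somewhere) *)
Definition proper_fun (n : nat) (F : 'cV[R]_n -> ext R) : Prop :=
  exists x, F x <> PInf.

(* closed: the epigraph {(x,t) | F x <= t} is closed (its complement is open) *)
Definition closed_fun (n : nat) (F : 'cV[R]_n -> ext R) : Prop :=
  forall x t, ~ ele (F x) (Fin t) ->
    exists2 d : R, 0 < d & forall (y : 'cV[R]_n) (s : R),
      (forall k, `|y k 0 - x k 0| < d) -> `|s - t| < d -> ~ ele (F y) (Fin s).

(* convex (the inequality is trivial when one value is +oo) *)
Definition convex_fun (n : nat) (F : 'cV[R]_n -> ext R) : Prop :=
  forall x y a b th, F x = Fin a -> F y = Fin b -> 0 < th -> th < 1 ->
    ele (F (th *: x + (1 - th) *: y)) (Fin (th * a + (1 - th) * b)).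

(* g is a subgradient of F at x (empty subdifferential outside dom F) *)
Definition subgrad (n : nat) (F : 'cV[R]_n -> ext R) (x g : 'cV[R]_n) : Prop :=
  exists a, F x = Fin a /\ forall y, ele (Fin (a + dotv g (y - x))) (F y).

Definition assum1_fi (M : nat) (F : 'cV[R]_M -> ext R) : Prop :=
  [/\ proper_fun F, closed_fun F, convex_fun F &
      forall x, F x <> PInf -> exists g, subgrad F x g].

Definition fsum (N M : nat) (f : 'I_N -> 'cV[R]_M -> ext R)
    (x : 'cV[R]_(\sum_(i < N) M)) : ext R :=
  \big[@eadd R/Fin 0]_(i < N) f i (submxcol x i).

(* scalar rounding quantizer: Q y = t*Delta iff (t-1/2)Delta <= y < (t+1/2)Delta *)
Definition Qs (Delta y : R) : R :=
  (Num.floor (y / Delta + 2^-1))%:~R * Delta.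
Definition Qv (Delta : R) (m n : nat) (w : 'M[R]_(m, n)) : 'M[R]_(m, n) :=
  map_mx (Qs Delta) w.

Definition A1mx (N M E : nat) (arc : 'I_(2 * E) -> 'I_N * 'I_N)
  : 'M[R]_(\sum_(q < 2 * E) M, \sum_(i < N) M) :=
  mxblock (fun (q : 'I_(2 * E)) (i : 'I_N) =>
    if (arc q).1 == i then (1%:M : 'M[R]_M) else 0).
Definition A2mx (N M E : nat) (arc : 'I_(2 * E) -> 'I_N * 'I_N)
  : 'M[R]_(\sum_(q < 2 * E) M, \sum_(i < N) M) :=
  mxblock (fun (q : 'I_(2 * E)) (i : 'I_N) =>
    if (arc q).2 == i then (1%:M : 'M[R]_M) else 0).

Definition Mplus N M E arc := (A1mx M arc)^T + (@A2mx N M E arc)^T.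
Definition Mminus N M E arc := (A1mx M arc)^T - (@A2mx N M E arc)^T.
Definition Lplus N M E arc :=
  2^-1 *: (@Mplus N M E arc *m (Mplus M arc)^T).
Definition Lminus N M E arc :=
  2^-1 *: (@Mminus N M E arc *m (Mminus M arc)^T).

Definition Wmx (N M : nat) (e : rel 'I_N)
  : 'M[R]_(\sum_(i < N) M, \sum_(i < N) M) :=
  mxblock (fun (i j : 'I_N) =>
    if i == j then ((#|[set k | e i k]|)%:R%:M : 'M[R]_M) else 0).

Definition Amx N M E arc := col_mx (@A1mx N M E arc) (A2mx M arc).
Definition Bmx (M E : nat) : 'M[R]_(\sum_(q < 2 * E) M + \sum_(q < 2 * E) M,
                                    \sum_(q < 2 * E) M) :=
  col_mx (- 1%:M) (- 1%:M).

End Defs.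

(* Main.v *)
Require Import Defs.
From HB Require Import structures.
From mathcomp Require Import all_boot all_order all_algebra.
From mathcomp Require Import ring lra.
Set Implicit Arguments. Unset Strict Implicit. Unset Printing Implicit Defensive.
Import Order.TTheory GRing.Theory Num.Theory.
Local Open Scope ring_scope.

Section H1.
Variable R : archiRealFieldType.

Lemma dotvE n (u v : 'cV[R]_n) : dotv u v = \sum_i u i 0 * v i 0.
Proof. by rewrite /dotv mxE; apply: eq_bigr => i _; rewrite mxE. Qed.

Lemma dotvDr n (u v w : 'cV[R]_n) : dotv u (v + w) = dotv u v + dotv u w.
Proof. by rewrite !dotvE -big_split; apply: eq_bigr => i _; rewrite mxE mulrDr. Qed.

Lemma dotvDl n (u v w : 'cV[R]_n) : dotv (v + w) u = dotv v u + dotv w u.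
Proof. by rewrite !dotvE -big_split; apply: eq_bigr => i _; rewrite mxE mulrDl. Qed.

Lemma dotvZr n a (u v : 'cV[R]_n) : dotv u (a *: v) = a * dotv u v.
Proof. by rewrite !dotvE mulr_sumr; apply: eq_bigr => i _; rewrite mxE mulrCA. Qed.

Lemma dotvZl n a (u v : 'cV[R]_n) : dotv (a *: v) u = a * dotv v u.
Proof. by rewrite !dotvE mulr_sumr; apply: eq_bigr => i _; rewrite mxE mulrA. Qed.

Lemma dotvNl n (u v : 'cV[R]_n) : dotv (- v) u = - dotv v u.
Proof. by rewrite -scaleN1r dotvZl mulN1r. Qed.

Lemma dotvC n (u v : 'cV[R]_n) : dotv u v = dotv v u.
Proof. by rewrite !dotvE; apply: eq_bigr => i _; rewrite mulrC. Qed.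

Lemma dotv_tr m n (A : 'M[R]_(m, n)) (w : 'cV[R]_m) (d : 'cV[R]_n) :
  dotv (A^T *m w) d = dotv w (A *m d).
Proof. by rewrite /dotv trmx_mul trmxK mulmxA. Qed.

Lemma sqnorm_ge0 n (v : 'cV[R]_n) : 0 <= sqnorm v.
Proof. by rewrite /sqnorm dotvE; apply: sumr_ge0 => i _; rewrite -expr2 sqr_ge0. Qed.

Lemma sqnormD n (u v : 'cV[R]_n) :
  sqnorm (u + v) = sqnorm u + 2 * dotv u v + sqnorm v.
Proof. rewrite /sqnorm !dotvDr !dotvDl (dotvC v u); ring. Qed.

Lemma sqnormZ n a (v : 'cV[R]_n) : sqnorm (a *: v) = a ^+ 2 * sqnorm v.
Proof. rewrite /sqnorm dotvZl dotvZr; ring. Qed.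

Lemma pos_limit (D Q : R) : 0 <= Q ->
  (forall t, 0 < t -> t < 1 -> 0 <= D + t * Q) -> 0 <= D.
Proof.
move=> hQ H; rewrite leNgt; apply/negP => hD.
have hw : 0 < Q - D by lra.
set t := (- D) / (2 * (Q - D)).
have ht : t * (2 * (Q - D)) = - D by rewrite /t mulfVK // mulf_neq0 // ?gt_eqF //; lra.
have ht0 : 0 < t by rewrite /t divr_gt0 //; lra.
have := H t ht0; have: t < 1.
  rewrite /t ltr_pdivrMr; [lra| by rewrite mulr_gt0 //; lra].
move=> ht1 h2. nra.
Qed.
End H1.

Section H2.
Variable R : archiRealFieldType.

Lemma eadd_fin (a b : ext R) c : eadd a b = Fin c ->
  exists a' b', [/\ a = Fin a', b = Fin b' & c = a' + b'].
Proof. by case: a => [a'|]; case: b => [b'|] //= [<-]; exists a', b'. Qed.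

Lemma ele_add (a b : ext R) x y : ele a (Fin x) -> ele b (Fin y) ->
  ele (eadd a b) (Fin (x + y)).
Proof. by case: a => [a'|]; case: b => [b'|] //= h1 h2; apply: lerD. Qed.

Lemma convex_fsum N M (f : 'I_N -> 'cV[R]_M -> ext R) :
  (forall i, convex_fun (f i)) -> convex_fun (fsum f).
Proof.
move=> hc x y a b th hx hy h0 h1.
move: hx hy; rewrite /fsum.
move=> hx hy.
move: a b hx hy.
apply: (big_ind3 (fun u v w => forall a b, v = Fin a -> w = Fin b ->
                   ele u (Fin (th * a + (1 - th) * b)))).
- by move=> a b [<-] [<-] /=; rewrite !mulr0 addr0.
- move=> u1 v1 w1 u2 v2 w2 H1 H2 a b /eadd_fin [a1 [a2 [e1 e2 ->]]]
    /eadd_fin [b1 [b2 [e3 e4 ->]]].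
  have := ele_add (H1 _ _ e1 e3) (H2 _ _ e2 e4).
  by congr ele; congr Fin; ring.
- move=> i _ a b ha hb.
  have -> : submxcol (th *: x + (1 - th) *: y) i =
     th *: submxcol x i + (1 - th) *: submxcol y i.
    by apply/matrixP => p q; rewrite !mxE.
  by apply: hc.
Qed.
End H2.

Section H3.
Variable R : archiRealFieldType.

Lemma min_subgrad n p (F : 'cV[R]_n -> ext R) (A : 'M[R]_(p,n)) (c l : 'cV[R]_p)
  (rho : R) x :
  convex_fun F -> 0 <= rho -> F x <> PInf ->
  (forall y, ele (eadd (F x) (Fin (dotv l (A *m x + c) + rho / 2 * sqnorm (A *m x + c))))
                 (eadd (F y) (Fin (dotv l (A *m y + c) + rho / 2 * sqnorm (A *m y + c))))) ->
  subgrad F x (- (A^T *m l + rho *: (A^T *m (A *m x + c)))).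
Proof.
move=> hc hr hfin hmin.
case hFx: (F x) => [a|]; last by [].
exists a; split=> // y.
case hFy: (F y) => [b|] //=.
set d := y - x; set u := A *m x + c; set v := A *m d.
have hK : dotv (- (A^T *m l + rho *: (A^T *m u))) d = - (dotv l v + rho * dotv u v).
  by rewrite dotvNl dotvDl dotvZl !dotv_tr.
rewrite hK.
suff : 0 <= b - a + (dotv l v + rho * dotv u v) by lra.
apply: (@pos_limit _ _ (rho / 2 * sqnorm v)).
  by apply: mulr_ge0; [apply: divr_ge0 | apply: sqnorm_ge0].
move=> t ht0 ht1.
have hcv := hc y x b a t hFy hFx ht0 ht1.
set xt := t *: y + (1 - t) *: x in hcv.
have hxt : xt = x + t *: d.
  by apply/matrixP => i j; rewrite /xt /d !mxE; ring.
have hAxt : A *m xt + c = u + t *: v.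
  by rewrite hxt mulmxDr -scalemxAr /u /v addrAC.
have := hmin xt; rewrite hFx hAxt.
case hFt: (F xt) hcv => [c'|] //= hcv.
rewrite -/u (dotvDr l u) dotvZr (sqnormD u) sqnormZ dotvZr.
move=> hm.
have hq : 0 <= t * ((b - a + (dotv l v + rho * dotv u v)) + t * (rho / 2 * sqnorm v)).
  nra.
by rewrite pmulr_rge0 in hq.
Qed.
End H3.

Section H4.
Variable R : archiRealFieldType.

Lemma blk_gram (K N M : nat) (sel : 'I_K -> 'I_N) :
  (mxblock (fun (q : 'I_K) (i : 'I_N) =>
      if sel q == i then (1%:M : 'M[R]_M) else 0))^T *m
   mxblock (fun (q : 'I_K) (i : 'I_N) =>
      if sel q == i then (1%:M : 'M[R]_M) else 0)
  = mxblock (fun (i j : 'I_N) =>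
      if i == j then ((#|[set q | sel q == i]|)%:R%:M : 'M[R]_M) else 0).
Proof.
rewrite tr_mxblock mul_mxblock; apply: eq_mxblock => i j.
case: eqP => [<-|hij].
  rewrite (eq_bigr (fun q => if sel q == i then (1%:M : 'M[R]_M) else 0)); last first.
    by move=> q _; case: eqP => _; rewrite ?trmx1 ?trmx0 ?mul1mx ?mul0mx.
  rewrite -big_mkcond /= sumr_const -scaler_nat -scalemx1.
  rewrite scale1r scalemx1; congr (_ %:R %:M).
  by apply: eq_card => q; rewrite inE.
rewrite big1 // => q _.
case: eqP => hi; case: eqP => hj; rewrite ?trmx0 ?mul0mx ?mulmx0 //.
by case: hij; rewrite -hi -hj.
Qed.
End H4.

Section H5.
Variable R : archiRealFieldType.

Lemma card_out N E (e : rel 'I_N) (arc : 'I_(2 * E) -> 'I_N * 'I_N) i :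
  injective arc -> (forall q, e (arc q).1 (arc q).2) ->
  (forall i j, e i j -> exists q, arc q = (i, j)) ->
  #|[set q | (arc q).1 == i]| = #|[set k | e i k]|.
Proof.
move=> hinj hed hsur.
have -> : [set k | e i k] = [set (arc q).2 | q in [set q | (arc q).1 == i]].
  apply/setP => k; rewrite inE; apply/idP/imsetP.
    move=> /hsur [q hq]; exists q; first by rewrite inE hq.
    by rewrite hq.
  move=> [q]; rewrite inE => /eqP hq ->; have := hed q; by rewrite hq.
rewrite card_in_imset // => q1 q2; rewrite !inE => /eqP h1 /eqP h2 h.
apply: hinj; move: h1 h2 h; case: (arc q1) => a b; case: (arc q2) => c d /= -> -> ->.
by [].
Qed.

Lemma card_in N E (e : rel 'I_N) (arc : 'I_(2 * E) -> 'I_N * 'I_N) i :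
  symmetric e -> injective arc -> (forall q, e (arc q).1 (arc q).2) ->
  (forall i j, e i j -> exists q, arc q = (i, j)) ->
  #|[set q | (arc q).2 == i]| = #|[set k | e i k]|.
Proof.
move=> hsym hinj hed hsur.
have -> : [set k | e i k] = [set (arc q).1 | q in [set q | (arc q).2 == i]].
  apply/setP => k; rewrite inE; apply/idP/imsetP.
    rewrite hsym => /hsur [q hq]; exists q; first by rewrite inE hq.
    by rewrite hq.
  move=> [q]; rewrite inE => /eqP hq ->; have := hed q; by rewrite hq hsym.
rewrite card_in_imset // => q1 q2; rewrite !inE => /eqP h1 /eqP h2 h.
apply: hinj; move: h1 h2 h; case: (arc q1) => a b; case: (arc q2) => c d /= -> -> ->.
by [].
Qed.

Lemma AtA N M E (e : rel 'I_N) (arc : 'I_(2 * E) -> 'I_N * 'I_N) :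
  symmetric e -> injective arc -> (forall q, e (arc q).1 (arc q).2) ->
  (forall i j, e i j -> exists q, arc q = (i, j)) ->
  (Amx R M arc)^T *m Amx R M arc = 2 *: Wmx R M e.
Proof.
move=> hsym hinj hed hsur.
rewrite /Amx tr_col_mx mul_row_col /A1mx /A2mx.
rewrite (@blk_gram R _ _ _ (fun q => (arc q).1)) (@blk_gram R _ _ _ (fun q => (arc q).2)).
rewrite scaler_nat mulr2n /Wmx; congr (_ + _); apply: eq_mxblock => i j;
  case: eqP => // _.
  by rewrite (card_out i hinj hed hsur).
by rewrite (card_in i hsym hinj hed hsur).
Qed.
End H5.

Section H6.
Variable R : archiRealFieldType.

Lemma BtE (S : nat) (w : 'cV[R]_(S + S)) :
  (col_mx (- 1%:M) (- 1%:M) : 'M[R]_(S + S, S))^T *m w = - usubmx w - dsubmx w.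
Proof.
rewrite -[w]vsubmxK tr_col_mx mul_row_col !col_mxKu !col_mxKd.
by rewrite !linearN /= trmx1 !mulNmx !mul1mx.
Qed.

Lemma BE (S : nat) (v : 'cV[R]_S) :
  (col_mx (- 1%:M) (- 1%:M) : 'M[R]_(S + S, S)) *m v = col_mx (- v) (- v).
Proof. by rewrite mul_col_mx mulNmx mul1mx. Qed.

Lemma AtE m (S : nat) (A1 A2 : 'M[R]_(S, m)) (w : 'cV[R]_(S + S)) :
  (col_mx A1 A2)^T *m w = A1^T *m usubmx w + A2^T *m dsubmx w.
Proof. by rewrite -{1}[w]vsubmxK tr_col_mx mul_row_col. Qed.

Lemma id_z (S : nat) (rho : R) (P Q Z b : 'cV[R]_S) : rho != 0 ->
  (- b - - b) + rho *: (- (P - Z) - (Q - Z)) = 0 -> Z = 2^-1 *: (P + Q).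
Proof.
move=> hr h; apply/matrixP => i j.
have := congr1 (fun Mx : 'cV[R]_S => Mx i j) h; rewrite !mxE => /eqP.
move=> /eqP hh.
have : rho * (Z i j * 2 - P i j - Q i j) = 0 by rewrite -hh; ring.
move/eqP; rewrite mulf_eq0 (negbTE hr) /= => /eqP hh2.
have h2 : (2 : R) != 0 by rewrite pnatr_eq0.
apply: (mulfI h2); rewrite mulrA divff //; lra.
Qed.

Lemma id_g (S : nat) (rho : R) (P Q b : 'cV[R]_S) :
  - b + rho *: (Q - 2^-1 *: (P + Q)) = - (b + rho *: (P - 2^-1 *: (P + Q))).
Proof. apply/matrixP => i j; rewrite !mxE; by field. Qed.

Lemma id_4 (S : nat) (P Q : 'cV[R]_S) :
  P - 2^-1 *: (P + Q) = 2^-1 *: (P - Q).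
Proof. apply/matrixP => i j; rewrite !mxE; by field. Qed.

Lemma id_3 n (rho : R) (Wx Mb LX : 'cV[R]_n) :
  - ((2 * rho) *: Wx + Mb - rho *: LX) = - (Mb + rho *: (2 *: Wx - LX)).
Proof. apply/matrixP => i j; rewrite !mxE; ring. Qed.
End H6.

Unset Implicit Arguments.
Theorem mainTheorem3 (R : archiRealFieldType) (N M E : nat)
  (e : rel 'I_N) (arc : 'I_(2 * E) -> 'I_N * 'I_N)
  (f : 'I_N -> 'cV[R]_M -> ext R) (Delta rho : R)
  (x : nat -> 'cV[R]_(\sum_(i < N) M))
  (z : nat -> 'cV[R]_(\sum_(q < 2 * E) M))
  (lam : nat -> 'cV[R]_(\sum_(q < 2 * E) M + \sum_(q < 2 * E) M)) :
  (2 <= N)%N -> (1 <= M)%N ->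
  (* simple undirected connected graph, arcs enumerated by q < 2E *)
  symmetric e -> irreflexive e -> (forall i j, connect e i j) ->
  injective arc -> (forall q, e (arc q).1 (arc q).2) ->
  (forall i j, e i j -> exists q, arc q = (i, j)) ->
  (* Assumption 1 *)
  (forall i, assum1_fi (f i)) ->
  (exists xs v, fsum f xs = Fin v /\ forall y, ele (Fin v) (fsum f y)) ->
  0 < Delta -> 0 < rho ->
  (* initialisation *)
  z 0%N = 2^-1 *: ((Mplus R M arc)^T *m Qv Delta (x 0%N)) ->
  dsubmx (lam 0%N) = - usubmx (lam 0%N) ->
  (* iteration *)
  (forall k y,
     ele (eadd (fsum f (x k.+1))
               (Fin (dotv (lam k) (Amx R M arc *m x k.+1 + Bmx R M E *m z k)
                     + rho / 2 * sqnorm (Amx R M arc *m x k.+1 + Bmx R M E *m z k))))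
         (eadd (fsum f y)
               (Fin (dotv (lam k) (Amx R M arc *m y + Bmx R M E *m z k)
                     + rho / 2 * sqnorm (Amx R M arc *m y + Bmx R M E *m z k))))) ->
  (forall k, (Bmx R M E)^T *m lam k
             + rho *: ((Bmx R M E)^T *m (Amx R M arc *m Qv Delta (x k.+1)
                                         + Bmx R M E *m z k.+1)) = 0) ->
  (forall k, lam k.+1 = lam k + rho *: (Amx R M arc *m Qv Delta (x k.+1)
                                        + Bmx R M E *m z k.+1)) ->
  forall k,
    [/\ dsubmx (lam k) = - usubmx (lam k),
        z k = 2^-1 *: ((Mplus R M arc)^T *m Qv Delta (x k)),
        subgrad (fsum f) (x k.+1)
          (- (2 * rho *: (Wmx R M e *m x k.+1) + Mminus R M arc *m usubmx (lam k)
              - rho *: (Lplus R M arc *m Qv Delta (x k))))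
      & Mminus R M arc *m usubmx (lam k.+1)
        = Mminus R M arc *m usubmx (lam k) + rho *: (Lminus R M arc *m Qv Delta (x k.+1))].
Proof.
move=> hN hM hsym hirr hconn hinj hed hsur hass [xs [v [hxs hv]]] hD hr hz0 hl0 hmin hzeq hlam.
set A1 := A1mx R M arc; set A2 := A2mx R M arc.
have hMpT : (Mplus R M arc)^T = A1 + A2.
  by rewrite /Mplus linearD /= !trmxK.
have hr0 : rho != 0 by rewrite gt_eqF.
have step : forall k, dsubmx (lam k) = - usubmx (lam k) ->
   z k.+1 = 2^-1 *: (A1 *m Qv Delta (x k.+1) + A2 *m Qv Delta (x k.+1)).
  move=> k hg; have := hzeq k.
  rewrite /Bmx !BtE BE /Amx mul_col_mx add_col_mx col_mxKu col_mxKd hg.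
  by move/id_z; apply.
have P : forall k, dsubmx (lam k) = - usubmx (lam k) /\
    z k = 2^-1 *: ((Mplus R M arc)^T *m Qv Delta (x k)).
  elim => [|k [hg hz]]; first by split.
  split; last by rewrite (step k hg) hMpT mulmxDl.
  rewrite hlam /Amx /Bmx BE mul_col_mx add_col_mx scale_col_mx -[lam k]vsubmxK add_col_mx
     col_mxKu col_mxKd -/A1 -/A2 (step k hg) hg.
  by apply: id_g.
move=> k; have [hg hz] := P k.
split => //.
- have hconv : convex_fun (fsum f) by apply: convex_fsum => i; case: (hass i).
  have hfin : fsum f (x k.+1) <> PInf.
    move=> hP; have := hmin k xs; by rewrite hP hxs.
  have := min_subgrad hconv (ltW hr) hfin (hmin k).
  congr subgrad.
  rewrite AtE id_3; congr (- (_ + _ *: _)).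
    by rewrite hg mulmxN /Mminus mulmxBl.
  rewrite mulmxDr mulmxA (AtA R M hsym hinj hed hsur) -scalemxAl; congr (_ + _).
  rewrite /Bmx BE AtE col_mxKu col_mxKd !mulmxN -opprD -mulmxDl hz /Lplus.
  by rewrite /Mplus -scalemxAr mulmxA -scalemxAl.
- rewrite hlam /Amx /Bmx BE mul_col_mx add_col_mx scale_col_mx -[lam k]vsubmxK add_col_mx
     !col_mxKu -/A1 -/A2 (step k hg) id_4 mulmxDr.
  congr (_ + _).
  rewrite -scalemxAr -scalemxAr; congr (_ *: _).
  rewrite /Lminus /Mminus -scalemxAl -mulmxA; congr (_ *: _); congr (_ *m _). 
  by rewrite linearB /= !trmxK mulmxBl.
Qed.
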